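(* Let $G$ be a connected graph on $p\ge 6$ vertices that contains no copy of $T_6^1$. Then $e(G)\le 2p-3$.
   Context: All graphs are finite and simple; a graph ''contains'' $H$ if it has a subgraph isomorphic to $H$; $e(G)$ is the number of edges of $G$. $T_6^1$ is the tree on vertex set $\{v_0,\ldots,v_5\}$ with edges $v_0v_1,v_0v_2,v_0v_3,v_2v_4,v_3v_5$. *)

(* Defs.v *)
From mathcomp Require Import all_boot.
Set Implicit Arguments. Unset Strict Implicit. Unset Printing Implicit Defensive.

Definition simple_graph (V : finType) (adj : rel V) : Prop :=
  symmetric adj /\ irreflexive adj.

Definition edge_set (V : finType) (adj : rel V) : {set {set V}} :=
  [set E : {set V} | [exists x, exists y, adj x y && (E == [set x; y])]].

Definition num_edges (V : finType) (adj : rel V) : nat := #|edge_set adj|.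

Definition connected_graph (V : finType) (adj : rel V) : Prop :=
  forall x y : V, connect adj x y.

Definition T61_edges : seq (nat * nat) :=
  [:: (0, 1); (0, 2); (0, 3); (2, 4); (3, 5)].

Definition contains_T61 (V : finType) (adj : rel V) : Prop :=
  exists f : 'I_6 -> V, injective f /\
    forall i j : 'I_6, (nat_of_ord i, nat_of_ord j) \in T61_edges -> adj (f i) (f j).

(* Main.v *)
Require Import Defs.
From mathcomp Require Import all_boot zify.
From Stdlib Require Import Classical.
Set Implicit Arguments. Unset Strict Implicit. Unset Printing Implicit Defensive.

Fixpoint bitlists n : seq (seq bool) := if n is n'.+1 then
  let r := bitlists n' in [seq true :: l | l <- r] ++ [seq false :: l | l <- r] else [:: [::]].

Lemma bitlists_mem n l : size l = n -> l \in bitlists n.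
Proof.
elim: n l => [|n IH] [|b l] //= [Hl].
rewrite mem_cat; apply/orP; case: b; [left|right]; apply: map_f; exact: IH.
Qed.

Definition gof (l : seq bool) : nat -> nat -> bool :=
  match l with [:: b01; b02; b03; b04; b05; b12; b13; b14; b15; b23; b24; b25; b34; b35; b45] =>
   fun i j => match i, j with
   | 0,1 | 1,0 => b01 | 0,2 | 2,0 => b02 | 0,3 | 3,0 => b03 | 0,4 | 4,0 => b04 | 0,5 | 5,0 => b05
   | 1,2 | 2,1 => b12 | 1,3 | 3,1 => b13 | 1,4 | 4,1 => b14 | 1,5 | 5,1 => b15
   | 2,3 | 3,2 => b23 | 2,4 | 4,2 => b24 | 2,5 | 5,2 => b25
   | 3,4 | 4,3 => b34 | 3,5 | 5,3 => b35 | 4,5 | 5,4 => b45 | _,_ => false end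
  | _ => fun _ _ => false end.
Definition perms6 := [seq pm <- permutations (iota 0 6) | nth 0 pm 2 < nth 0 pm 3].
Definition tcheckP P l := let g := gof l in
  has (fun pm => all (fun e => g (nth 0 pm e.1) (nth 0 pm e.2)) T61_edges) P.
Definition noiso l := let g := gof l in all (fun i => has (fun j => g i j) (iota 0 6)) (iota 0 6).
Definition cond l := (10 <= count id l) && noiso l.
Definition bruteb := let P := perms6 in all (fun l => cond l ==> tcheckP P l) (bitlists 15).
Lemma brute : bruteb.
Proof. vm_compute. reflexivity. Qed.
Lemma brute' l : l \in bitlists 15 -> cond l -> tcheckP perms6 l.
Proof. move=> Hl Hc; have := brute; rewrite /bruteb => /allP /(_ l Hl); by rewrite Hc. Qed.

Section G.
Variables (V : finType) (adj : rel V).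
Hypothesis sym : symmetric adj.
Hypothesis irr : irreflexive adj.
Hypothesis noT : ~ contains_T61 adj.

Lemma mkT z0 z1 z2 z3 z4 z5 : uniq [:: z0;z1;z2;z3;z4;z5] ->
  adj z0 z1 -> adj z0 z2 -> adj z0 z3 -> adj z2 z4 -> adj z3 z5 -> False.
Proof.
move=> U a01 a02 a03 a24 a35; apply: noT.
exists (fun i : 'I_6 => nth z0 [:: z0;z1;z2;z3;z4;z5] i); split.
  move=> i j /eqP; rewrite nth_uniq ?size_tuple //= => /eqP; exact: val_inj.
move=> [i Hi] [j Hj] /=.
case: i Hi => [|[|[|[|[|[|i]]]]]] // Hi; case: j Hj => [|[|[|[|[|[|j]]]]]] // Hj;
  rewrite /T61_edges !inE //=.
Qed.

Lemma mkTi x (w : seq V) a b c d e f : uniq w ->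
  all (fun i => i < size w) [:: a;b;c;d;e;f] -> uniq [:: a;b;c;d;e;f] ->
  let W := nth x w in
  adj (W a) (W b) -> adj (W a) (W c) -> adj (W a) (W d) -> adj (W c) (W e) -> adj (W d) (W f) -> False.
Proof.
move=> Uw Hs Ui W; apply: mkT.
have -> : [:: W a; W b; W c; W d; W e; W f] = map W [:: a;b;c;d;e;f] by [].
rewrite map_inj_in_uniq // => i j /(allP Hs) Hi /(allP Hs) Hj /eqP.
by rewrite /W nth_uniq // => /eqP.
Qed.

Lemma pstep x s i : path adj x s -> i < size s ->
  adj (nth x (x :: s) i) (nth x (x :: s) i.+1).
Proof. by move=> /(pathP x) H /H. Qed.

Definition rS (S : {set V}) := [rel u v | adj u v && (u \in S) && (v \in S)].
Definition conn (S : {set V}) := forall u v, u \in S -> v \in S -> connect (rS S) u v.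
Definition gpath (S : {set V}) x s := [&& path adj x s, uniq (x :: s) & all (fun v => v \in S) (x :: s)].
Definition longest (S : {set V}) x s := gpath S x s /\ forall y t, gpath S y t -> size t <= size s.

Lemma gpath_size (S : {set V}) x s : gpath S x s -> size s < #|V|.
Proof.
case/and3P=> _ U _.
rewrite -ltnS -[(size s).+1]/(size (x :: s)) -(card_uniqP U).
exact: max_card.
Qed.

Lemma exists_longest (S : {set V}) x : x \in S -> exists y t, longest S y t.
Proof.
move=> xS.
suff H : forall n y t, #|V| - size t <= n -> gpath S y t -> exists y t, longest S y t.
  by apply: (H #|V| x [::]); rewrite /gpath /= ?xS //; lia.
elim=> [|n IH] y t Hn G.
  by have := gpath_size G; lia.
case: (classic (forall y' t', gpath S y' t' -> size t' <= size t)) => [H|H].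
  by exists y, t.
have [y' H1] := not_all_ex_not _ _ H.
have [t' H2] := not_all_ex_not _ _ H1.
have [G' Hs] := imply_to_and _ _ H2.
apply: (IH y' t' _ G').
have := gpath_size G'; move/negP: Hs; rewrite -ltnNge; lia.
Qed.

Lemma long_nb (S : {set V}) x s z : longest S x s -> z \in S -> adj x z -> z \in s.
Proof.
move=> [G M] zS axz; apply/negPn/negP => zs.
have : gpath S z (x :: s).
  case/and3P: G => P U A.
  apply/and3P; split.
  - by rewrite /= sym axz P.
  - rewrite cons_uniq U andbT inE negb_or zs andbT.
    by apply/eqP => zx; rewrite zx irr in axz.
  - by rewrite /= zS.
by move/M => /=; rewrite ltnn.
Qed.

Lemma first_hit (r : rel V) (B : pred V) a p : a \notin B -> path r a p -> last a p \in B ->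
  exists d c, [/\ d \notin B, c \in B, r d c &
     connect [rel u v | r u v && (u \notin B) && (v \notin B)] a d].
Proof.
elim: p a => [|c' p IH] a aB /=; first by rewrite (negbTE aB).
case/andP=> rac P L.
case: (boolP (c' \in B)) => cB.
  by exists a, c'; split.
have [d [c [dB cB' rdc C]]] := IH c' cB P L.
exists d, c; split => //.
apply: connect_trans C; apply: connect1; by rewrite /= rac aB cB.
Qed.

Lemma rS_sym (S : {set V}) : symmetric (rS S).
Proof. move=> u v; rewrite /= sym; by case: (u \in S); case: (v \in S); rewrite ?andbF ?andbT. Qed.

Lemma path_in (A : {set V}) x p : all (fun v => v \in A) (x :: p) -> path adj x p -> path (rS A) x p.
Proof.
elim: p x => [|y p IH] x //= /and3P [xA yA Ap] /andP [axy P].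
by rewrite axy xA yA IH //= yA.
Qed.

Lemma long_conn (S : {set V}) x s : longest S x s -> conn S -> conn (S :\ x).
Proof.
move=> L C.
have [G _] := L.
case/and3P: G => P U A.
have xs : x \notin s by case/andP: U.
have claim : forall a, a \in S :\ x -> exists2 c, c \in s & connect (rS (S :\ x)) a c.
  move=> a; rewrite !inE => /andP [ax aS].
  case: (boolP (a \in s)) => [as_|nas]; first by exists a.
  have xS : x \in S by move: A => /= /andP [].
  have /connectP [p Pp Lp] := C a x aS xS.
  have := @first_hit (rS S) [pred v | (v == x) || (v \in s)] a p.
  rewrite !inE (negbTE ax) (negbTE nas) /= => /(_ isT Pp).
  rewrite -Lp eqxx => /(_ isT) [d [c [dB cB rdc Cd]]].
  move: dB; rewrite !inE negb_or => /andP [dx ds].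
  move: cB rdc; rewrite !inE => /orP [/eqP -> | cs] /=.
    move=> /andP [/andP [adx dS] _]; rewrite sym in adx.
    by rewrite (long_nb L dS adx) in ds.
  move=> /andP [/andP [adc dS] cS].
  exists c => //.
  apply: (connect_trans (y := d)).
    apply: connect_sub Cd => u v /= /andP [/andP [/andP [/andP [auv uS] vS]]].
    rewrite !inE !negb_or => /andP [ux _] /andP [vx _].
    by apply: connect1; rewrite /= !inE auv ux uS vx vS.
  apply: connect1; rewrite /= !inE adc dx dS cS /= !andbT.
  by apply/eqP=> cx; rewrite -cx cs in xs.
have Ps : forall c c', c \in s -> c' \in s -> connect (rS (S :\ x)) c c'.
  move/allP: A => A.
  case: s L P U A xs {claim} => [|x1 s'] // L P U A xs c c' cs c's.
  have Hp : path (rS (S :\ x)) x1 s'.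
    apply: path_in; last by case/andP: P.
    apply/allP=> v vin; rewrite !inE.
    have vA : v \in S by apply: A; rewrite inE vin orbT.
    rewrite vA andbT; apply/eqP => vx; move: xs; by rewrite -vx vin.
  have Hc := path_connect Hp.
  apply: (connect_trans (y := x1)); last exact: Hc.
  by rewrite (sym_connect_sym (@rS_sym _)); apply: Hc.
move=> a b aS bS.
have [c cs Ca] := claim a aS; have [c' c's Cb] := claim b bS.
apply: (connect_trans Ca); apply: (connect_trans (Ps c c' cs c's)).
by rewrite (sym_connect_sym (@rS_sym _)).
Qed.


Definition eS (S : {set V}) := #|[set E in edge_set adj | E \subset S]|.
Definition deg (S : {set V}) x := #|[set y in S | adj x y]|.

Lemma eS_del (S : {set V}) u : u \in S -> eS S <= eS (S :\ u) + deg S u.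
Proof.
move=> uS.
have sub : [set E in edge_set adj | E \subset S] \subset
   [set E in edge_set adj | E \subset S :\ u] :|: [set [set u; y] | y in [set y in S | adj u y]].
  apply/subsetP => E; rewrite !inE => /andP [/existsP [a /existsP [b /andP [aab /eqP EE]]] ES].
  case: (boolP (u \in E)) => uE.
    apply/orP; right; apply/imsetP.
    move: uE; rewrite EE !inE => /orP [/eqP ua | /eqP ub].
      exists b; last by rewrite ua.
      rewrite inE ua aab andbT; apply: (subsetP ES); by rewrite EE !inE eqxx orbT.
    exists a; last by rewrite ub setUC.
    rewrite inE ub sym aab andbT; apply: (subsetP ES); by rewrite EE !inE eqxx.
  apply/orP; left; rewrite ?inE; apply/andP; split.
    rewrite ?inE; apply/existsP; exists a; apply/existsP; exists b; by rewrite aab EE eqxx.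
  apply/subsetP => z zE; rewrite !inE (subsetP ES _ zE) andbT.
  by apply/eqP => zu; rewrite -zu zE in uE.
apply: (leq_trans (subset_leq_card sub)); apply: (leq_trans (leq_card_setU _ _)).
by rewrite leq_add2l; apply: leq_imset_card.
Qed.

Lemma out_of (S : {set V}) (l : seq V) : size l < #|S| -> exists2 z, z \in S & z \notin l.
Proof.
move=> H; have : ~~ (S \subset l).
  apply/negP => /subset_leq_card H2; move: (leq_trans H2 (card_size l)); lia.
by case/subsetPn => z zS zl; exists z.
Qed.

Lemma long_same (S : {set V}) x s y t : longest S x s -> gpath S y t -> size t = size s -> longest S y t.
Proof. by move=> [G M] G' E; split => // y' t' /M; rewrite E. Qed.

Lemma long_inS (S : {set V}) x s : longest S x s -> x \in S.
Proof. by case=> /and3P [_ _ /= /andP []]. Qed.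

Lemma uniq_swap (a b : V) t : uniq (a :: b :: t) = uniq (b :: a :: t).
Proof.
rewrite /= !inE !negb_or eq_sym.
by case: (b == a); case: (a \in t); case: (b \in t).
Qed.

Ltac slia := simpl in *; (try (let k := fresh "k" in set (k := size _) in * )); lia.

Lemma T1 x s i j : uniq (x :: s) -> path adj x s -> 2 <= i -> i < j -> 5 <= j -> j < size (x :: s) ->
  adj x (nth x (x :: s) i) -> adj x (nth x (x :: s) j) -> False.
Proof.
move=> U P i2 ij j5 js ai aj.
have [m Em] : exists m, j = m.+2 by exists j.-2; slia.
subst j. rewrite /= in js.
have pst : forall k, k < size s -> adj (nth x (x :: s) k) (nth x (x :: s) k.+1).
  by move=> k Hk; apply: pstep.
have pst' : forall k, k < size s -> adj (nth x (x :: s) k.+1) (nth x (x :: s) k).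
  by move=> k Hk; rewrite sym; apply: pst.
case: (eqVneq i 2) => [Ei|Ni].
  subst i.
  apply: (@mkTi x (x :: s) 0 1 2 m.+2 3 m.+1 U).
  - rewrite /=; slia.
  - rewrite /= !inE; slia.
  - by apply: pst; slia.
  - exact: ai.
  - exact: aj.
  - by apply: pst; slia.
  - by apply: pst'; slia.
case: (eqVneq i m.+1) => [Ei|Ni'].
  subst i.
  apply: (@mkTi x (x :: s) 0 m.+2 1 m.+1 2 m U).
  - rewrite /=; slia.
  - rewrite /= !inE; slia.
  - exact: aj.
  - by apply: pst; slia.
  - exact: ai.
  - by apply: pst; slia.
  - by apply: pst'; slia.
apply: (@mkTi x (x :: s) 0 i 1 m.+2 2 m.+1 U).
- rewrite /=; slia.
- rewrite /= !inE; slia.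
- exact: ai.
- by apply: pst; slia.
- exact: aj.
- by apply: pst; slia.
- by apply: pst'; slia.
Qed.

Ltac tadj := simpl; first [assumption | rewrite sym; assumption].

Lemma T2 (S : {set V}) x x1 x2 x3 x4 r : conn S -> 6 <= #|S| ->
  gpath S x [:: x1, x2, x3, x4 & r] -> adj x x4 -> False.
Proof.
move=> cS S6 /and3P [P U A] a04.
have /and5P [a01 a12 a23 a34 _] : [&& adj x x1, adj x1 x2, adj x2 x3, adj x3 x4 & path adj x4 r] := P.
have U5 : uniq [:: x;x1;x2;x3;x4].
  by move: U; rewrite -[x :: _]/([:: x;x1;x2;x3;x4] ++ r) cat_uniq => /andP [].
have xS : x \in S by move: A => /= /andP [].
have [z zS zC] := @out_of S [:: x;x1;x2;x3;x4] (leq_trans (isT : 5 < 6) S6).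
have /connectP [p Pp Lp] := cS x z xS zS.
have := @first_hit (rS S) [pred v | v \notin [:: x;x1;x2;x3;x4]] x p.
rewrite !inE eqxx /= => /(_ isT Pp); rewrite -Lp => /(_ ltac:(by move: zC; rewrite !inE)) [d [c [dB cB /= /andP [/andP [adc _] _] _]]].
have Uc : uniq [:: c;x;x1;x2;x3;x4] by rewrite cons_uniq U5 andbT.
move: dB; rewrite !inE negbK => /or4P [/eqP E|/eqP E|/eqP E|/orP [/eqP E|/eqP E]]; subst d.
- by apply: (@mkTi c [:: c;x;x1;x2;x3;x4] 1 0 2 5 3 4 Uc) => //; tadj.
- by apply: (@mkTi c [:: c;x;x1;x2;x3;x4] 2 0 3 1 4 5 Uc) => //; tadj.
- by apply: (@mkTi c [:: c;x;x1;x2;x3;x4] 3 0 4 2 5 1 Uc) => //; tadj.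
- by apply: (@mkTi c [:: c;x;x1;x2;x3;x4] 4 0 5 3 1 2 Uc) => //; tadj.
- by apply: (@mkTi c [:: c;x;x1;x2;x3;x4] 5 0 1 4 2 3 Uc) => //; tadj.
Qed.

Lemma idx_of (x : V) (s : seq V) z : z \in s -> exists2 i, 0 < i < size (x :: s) & z = nth x (x :: s) i.
Proof.
move=> zs; exists (index z s).+1; last by rewrite /= nth_index.
by rewrite /= ltnS index_mem zs.
Qed.

Lemma card2_lt (N : {set V}) a b : 3 <= #|N| -> exists2 z, z \in N & (z != a) && (z != b).
Proof.
move=> H; have : ~~ (N \subset [set a; b]).
  apply/negP => /subset_leq_card; rewrite cards2; case: (a != b) => /=; lia.
by case/subsetPn => z zN; rewrite !inE negb_or => zn; exists z.
Qed.

Lemma analysis (S : {set V}) x s : conn S -> 6 <= #|S| -> longest S x s -> 3 <= deg S x ->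
  exists x1 x2 x3 r, [/\ s = [:: x1, x2, x3 & r], adj x x2, adj x x3 &
     forall z, z \in S -> adj x z -> [|| z == x1, z == x2 | z == x3]].
Proof.
move=> cS S6 L D.
have [G M] := L; case/and3P: (G) => P U A.
rewrite /deg in D; set N := [set y in S | adj x y] in D.
have Ns : forall z, z \in N -> z \in s.
  by move=> z; rewrite inE => /andP [zS axz]; exact: long_nb L zS axz.
have s3 : 3 <= size s.
  have : N \subset s by apply/subsetP => z /Ns.
  move/subset_leq_card => H; exact: (leq_trans D (leq_trans H (card_size s))).
have idx : forall z, z \in N -> exists2 i, 0 < i <= 3 & z = nth x (x :: s) i.
  move=> z zN; have [i /andP [i0 ilt] Ez] := idx_of x (Ns z zN).
  exists i => //; rewrite i0 /=; rewrite leqNgt; apply/negP => i4.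
  have axz : adj x (nth x (x :: s) i) by rewrite -Ez; move: zN; rewrite inE => /andP [].
  case: (eqVneq i 4) => [E4|N4].
    subst i; move: ilt axz G; rewrite /=.
    case: s {P U A M L Ns s3 Ez} => [|x1 [|x2 [|x3 [|x4 r]]]] //= _ axz G.
    exact: (T2 cS S6 G axz).
  have [z' z'N /andP [z'1 z'z]] := card2_lt (nth x (x :: s) 1) z D.
  have [j /andP [j0 jlt] Ez'] := idx_of x (Ns z' z'N).
  have axz' : adj x (nth x (x :: s) j) by rewrite -Ez'; move: z'N; rewrite inE => /andP [].
  have j1 : j != 1 by apply/eqP => j1; rewrite Ez' j1 eqxx in z'1.
  have ji : j != i by apply/eqP => ji; rewrite Ez' ji -Ez eqxx in z'z.
  case: (ltnP j i) => ij.
    by apply: (T1 U P _ _ _ ilt axz' axz); clear -i4 N4 j0 j1 ij ji; lia.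
  by apply: (T1 U P _ _ _ jlt axz axz'); clear -i4 N4 j0 j1 ij ji; lia.
case: s P U A M L Ns s3 idx G => [|x1 [|x2 [|x3 r]]] // P U A M L Ns s3 idx G.
have nbh : forall z, z \in S -> adj x z -> [|| z == x1, z == x2 | z == x3].
  move=> z zS axz; have zN : z \in N by rewrite inE zS axz.
  have [i /andP [i0 i3] ->] := idx z zN.
  by case: i i0 i3 => [|[|[|[|i]]]] //= _ _; rewrite eqxx ?orbT.
have xS : forall z, z \in N -> z \in S by move=> z; rewrite inE => /andP [].
have xA : forall z, z \in N -> adj x z by move=> z; rewrite inE => /andP [].
exists x1, x2, x3, r; split => //.
- have [z zN /andP [z1 z3]] := card2_lt x1 x3 D.
  have := nbh z (xS _ zN) (xA _ zN); rewrite (negbTE z1) (negbTE z3) orbF /= => /eqP E.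
  by rewrite -E; apply: xA.
- have [z zN /andP [z1 z2]] := card2_lt x1 x2 D.
  have := nbh z (xS _ zN) (xA _ zN); rewrite (negbTE z1) (negbTE z2) /= => /eqP E.
  by rewrite -E; apply: xA.
Qed.

Lemma uniq_perm3 (a b c : V) t : uniq [:: a, b, c & t] = uniq [:: c, b, a & t].
Proof.
rewrite /= !inE !negb_or (eq_sym b a) (eq_sym c a) (eq_sym c b).
by case: (a == b); case: (a == c); case: (b == c); case: (a \in t); case: (b \in t); case: (c \in t).
Qed.

Lemma good (S : {set V}) : conn S -> 6 <= #|S| ->
  exists2 u, u \in S & (deg S u <= 2 /\ conn (S :\ u)).
Proof.
move=> cS S6.
have /card_gt0P [z0 z0S] : 0 < #|S| by lia.
have [x0 [t L]] := exists_longest z0S.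
have fin : forall y t, longest S y t -> deg S y <= 2 -> exists2 u, u \in S & (deg S u <= 2 /\ conn (S :\ u)).
  move=> y t' L' d; exists y; first exact: long_inS L'.
  split => //; exact: long_conn L' cS.
case: (leqP (deg S x0) 2) => [d|d]; first exact: fin _ _ L d.
have [x1 [x2 [x3 [r [Es a02 a03 N0]]]]] := analysis cS S6 L d; subst t.
have [G M] := L; case/and3P: (G) => P U A.
have /and3P [a01 a12 P3] : [&& adj x0 x1, adj x1 x2 & path adj x2 (x3 :: r)] := P.
have /and4P [x0S x1S x2S A'] : [&& x0 \in S, x1 \in S, x2 \in S & all (fun v => v \in S) (x3 :: r)] := A.
have G1 : gpath S x1 [:: x0, x2, x3 & r].
  apply/and3P; split.
  - by rewrite /= (sym x1 x0) a01 a02.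
  - by rewrite uniq_swap.
  - by rewrite /= x0S x1S x2S.
have L1 := long_same L G1 erefl.
case: (leqP (deg S x1) 2) => [d1|d1]; first exact: fin _ _ L1 d1.
have [b1 [b2 [b3 [r1 [E1 _ a13 N1]]]]] := analysis cS S6 L1 d1.
case: E1 => Eb1 Eb2 Eb3 Er1; subst b1 b2 b3 r1.
have /andP [a23 P4] : adj x2 x3 && path adj x3 r := P3.
have G2 : gpath S x2 [:: x1, x0, x3 & r].
  apply/and3P; split.
  - by rewrite /= (sym x2 x1) a12 (sym x1 x0) a01 a03.
  - by rewrite uniq_perm3.
  - by rewrite /= x0S x1S x2S.
have L2 := long_same L G2 erefl.
case: (leqP (deg S x2) 2) => [d2|d2]; first exact: fin _ _ L2 d2.
have [c1 [c2 [c3 [r2 [E2 _ _ N2]]]]] := analysis cS S6 L2 d2.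
case: E2 => Ec1 Ec2 Ec3 Er2; subst c1 c2 c3 r2.
case: r P U A M L G G1 L1 G2 L2 P3 A' P4 => [|x4 [|x5 r]] P U A M L G G1 L1 G2 L2 P3 A' P4.
-
  have x3S : x3 \in S by move: A' => /= /andP [].
  have [z zS zC] := @out_of S [:: x0;x1;x2;x3] (leq_trans (isT : 4 < 6) S6).
  have /connectP [p Pp Lp] := cS x0 z x0S zS.
  have := @first_hit (rS S) [pred v | v \notin [:: x0;x1;x2;x3]] x0 p.
  rewrite !inE eqxx /= => /(_ isT Pp); rewrite -Lp => /(_ ltac:(by move: zC; rewrite !inE)).
  move=> [dd [c [dB cB /= /andP [/andP [adc dS] cS'] _]]].
  move: cB; rewrite !inE !negb_or => /and4P [c0 c1 c2 c3].
  move: dB; rewrite !inE negbK => /or4P [/eqP E|/eqP E|/eqP E|/eqP E]; subst dd.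
  + by have := N0 c cS' adc; rewrite (negbTE c1) (negbTE c2) (negbTE c3).
  + by have := N1 c cS' adc; rewrite (negbTE c0) (negbTE c2) (negbTE c3).
  + by have := N2 c cS' adc; rewrite (negbTE c0) (negbTE c1) (negbTE c3).
  + have G3 : gpath S x0 [:: x1; x2; x3; c].
      apply/and3P; split.
      * by rewrite /= a01 a12 a23 adc.
      * have -> : [:: x0; x1; x2; x3; c] = [:: x0; x1; x2; x3] ++ [:: c] by [].
        by rewrite cat_uniq U /= !inE !negb_or c0 c1 c2 c3.
      * by rewrite /= x0S x1S x2S x3S cS'.
    by have := M _ _ G3.
-
  have /and3P [x3S x4S _] : [&& x3 \in S, x4 \in S & true] := A'.
  have a34 : adj x3 x4 by move: P4 => /= /andP [].
  have G3 : gpath S x4 [:: x3; x2; x1; x0].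
    apply/and3P; split.
    + by rewrite /= (sym x4 x3) a34 (sym x3 x2) a23 (sym x2 x1) a12 (sym x1 x0) a01.
    + have -> : [:: x4; x3; x2; x1; x0] = rev [:: x0; x1; x2; x3; x4] by [].
      by rewrite rev_uniq.
    + by rewrite /= x0S x1S x2S x3S x4S.
  have L3 := long_same L G3 erefl.
  case: (leqP (deg S x4) 2) => [d4|d4]; first exact: fin _ _ L3 d4.
  have [e1 [e2 [e3 [r3 [E3 _ a41 _]]]]] := analysis cS S6 L3 d4.
  case: E3 => Ee1 Ee2 Ee3 Er3; subst e1 e2 e3 r3.
  have := N1 x4 x4S; rewrite sym a41 => /(_ isT).
  move: U; rewrite /= !inE !negb_or => /and5P [/and4P [_ _ _ n04] /and3P [_ _ n14] /andP [_ n24] n34 _].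
  by rewrite (eq_sym x4 x0) (eq_sym x4 x2) (eq_sym x4 x3) (negbTE n04) (negbTE n24) (negbTE n34).
-
  have /andP [a34 /andP [a45 _]] : adj x3 x4 && (adj x4 x5 && path adj x5 r) := P4.
  have U6 : uniq [:: x0;x1;x2;x3;x4;x5].
    by move: U; rewrite -[x0 :: _]/([:: x0;x1;x2;x3;x4;x5] ++ r) cat_uniq => /andP [].
  by exfalso; apply: (@mkTi x0 [:: x0;x1;x2;x3;x4;x5] 3 2 1 4 0 5 U6) => //; tadj.
Qed.

Lemma base (S : {set V}) : conn S -> #|S| = 6 -> eS S <= 9.
Proof.
move=> cS S6.
have U0 := enum_uniq (mem S).
have M0 : forall v, (v \in S) = (v \in enum S) by move=> v; rewrite mem_enum.
have Sz : size (enum S) = 6 by rewrite -cardE.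
move: U0 M0 Sz.
case: (enum S) => [|y0 [|y1 [|y2 [|y3 [|y4 [|y5 [|? ?]]]]]]] // UY MY _.
set Y := [:: y0; y1; y2; y3; y4; y5] in UY MY.
set l := [:: adj y0 y1; adj y0 y2; adj y0 y3; adj y0 y4; adj y0 y5; adj y1 y2; adj y1 y3;
   adj y1 y4; adj y1 y5; adj y2 y3; adj y2 y4; adj y2 y5; adj y3 y4; adj y3 y5; adj y4 y5].
have gofE : forall i j, i < 6 -> j < 6 -> gof l i j = adj (nth y0 Y i) (nth y0 Y j).
  move=> i j; case: i => [|[|[|[|[|[|i]]]]]] // _; case: j => [|[|[|[|[|[|j]]]]]] // _;
    rewrite /=; first [done | by rewrite irr | by rewrite sym].
set PR := [:: (y0,y1); (y0,y2); (y0,y3); (y0,y4); (y0,y5); (y1,y2); (y1,y3);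
   (y1,y4); (y1,y5); (y2,y3); (y2,y4); (y2,y5); (y3,y4); (y3,y5); (y4,y5)].
have bnd : eS S <= count id l.
  have -> : count id l = size [seq [set p.1; p.2] | p <- PR & adj p.1 p.2].
    by rewrite size_map size_filter.
  apply: (leq_trans _ (card_size _)); apply: subset_leq_card; apply/subsetP => E.
  rewrite !inE => /andP [/existsP [a /existsP [b /andP [aab /eqP ->]]] ES].
  have aY : a \in Y by rewrite -MY; apply: (subsetP ES); rewrite !inE eqxx.
  have bY : b \in Y by rewrite -MY; apply: (subsetP ES); rewrite !inE eqxx orbT.
  move: aY bY; rewrite !inE.
  move=> /or4P [/eqP Ea|/eqP Ea|/eqP Ea|/or3P [/eqP Ea|/eqP Ea|/eqP Ea]] /or4P [/eqP Eb|/eqP Eb|/eqP Eb|/or3P [/eqP Eb|/eqP Eb|/eqP Eb]];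
    (try by rewrite Ea Eb irr in aab); apply/mapP; first
      [ exists (a, b); [by rewrite mem_filter /= aab /PR Ea Eb !inE eqxx ?orbT | by []]
      | exists (b, a); [by rewrite mem_filter /= sym aab /PR Ea Eb !inE eqxx ?orbT | by rewrite setUC]].
rewrite leqNgt; apply/negP => big.
apply: noT.
have nz : forall i, i < 6 -> exists2 j, j < 6 & gof l i j.
  move=> i i6.
  have yiS : nth y0 Y i \in S by rewrite MY mem_nth.
  pose k := if i == 0 then 1 else 0.
  have k6 : k < 6 by rewrite /k; case: (i == 0).
  have ykS : nth y0 Y k \in S by rewrite MY mem_nth.
  have ne : nth y0 Y i != nth y0 Y k.
    by rewrite nth_uniq // /k; case: (eqVneq i 0) => [->|].
  have /connectP [[|c p] Pp Lp] := cS _ _ yiS ykS.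
    by rewrite Lp /= eqxx in ne.
  rewrite /= in Pp; move/andP: Pp => [/andP [/andP [ac _] cS'] _].
  have cY : c \in Y by rewrite -MY.
  exists (index c Y); first by rewrite -[6]/(size Y) index_mem.
  by rewrite gofE // ?nth_index // -[6]/(size Y) index_mem.
have C : cond l.
  rewrite /cond; apply/andP; split; first exact: leq_trans big bnd.
  apply/allP => i; rewrite mem_iota add0n => /andP [_ i6].
  have [j j6 g] := nz i i6.
  apply/hasP; exists j => //; by rewrite mem_iota add0n.
have := brute' (@bitlists_mem 15 l erefl) C; rewrite /tcheckP => /hasP [pm].
rewrite mem_filter mem_permutations => /andP [_ Ppm] /allP Hpm.
have Upm : uniq pm by rewrite (perm_uniq Ppm) iota_uniq.
have Spm : size pm = 6 by rewrite (perm_size Ppm) size_iota.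
have Lpm : forall i, i < 6 -> nth 0 pm i < 6.
  move=> i i6; have : nth 0 pm i \in iota 0 6 by rewrite -(perm_mem Ppm) mem_nth // Spm.
  by rewrite mem_iota add0n.
exists (fun i : 'I_6 => nth y0 Y (nth 0 pm i)); split.
  move=> i j /eqP; rewrite nth_uniq ?Lpm //.
  by rewrite nth_uniq ?Spm // => /eqP /val_inj.
move=> i j ije.
by have := Hpm _ ije; rewrite gofE ?Lpm ?ltn_ord.
Qed.

Lemma mainS n : forall S : {set V}, #|S| = n -> 6 <= n -> conn S -> eS S <= 2 * n - 3.
Proof.
elim: n => [|n IH] S Sn n6 cS; first by [].
case: (eqVneq n 5) => [E5|N5].
  subst n; exact: base cS Sn.
have [u uS [du cu]] := good cS (ltac:(by rewrite Sn)).
have Su : #|S :\ u| = n by move: Sn; rewrite (cardsD1 u S) uS; case.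
have := IH _ Su ltac:(lia) cu.
have := eS_del uS; lia.
Qed.

End G.

Theorem lemma2p4 (V : finType) (adj : rel V) :
  simple_graph adj -> 6 <= #|V| -> connected_graph adj -> ~ contains_T61 adj ->
  num_edges adj <= 2 * #|V| - 3.
Proof.
move=> [sym irr] V6 cG noT.
have E : num_edges adj = eS adj [set: V].
  by apply: eq_card => E; rewrite !inE subsetT andbT.
rewrite E; apply: (mainS sym irr noT (cardsT V) V6).
move=> x y _ _.
have H : rS adj [set: V] =2 adj by move=> a b; rewrite /rS /= !inE !andbT.
by rewrite (eq_connect H); apply: cG.
Qed.
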